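(* Let $\Omega\subset\mathbb{R}^2$ be open, connected and simply connected, with light-cone coordinates $(\xi_L,\xi_R)$, and let $f:\Omega\to\mathbb{C}^N\setminus\{0\}$ be a smooth solution of the Euler--Lagrange equations of the $\mathbb{C}P^{N-1}$ sigma model on Minkowski space, $$P\Big\{\partial_L\partial_R f-\frac{1}{f^\dagger f}\big((f^\dagger\partial_R f)\,\partial_L f+(f^\dagger\partial_L f)\,\partial_R f\big)\Big\}=0,\qquad P={\bf 1}-\frac{f\otimes f^\dagger}{f^\dagger f}.$$ Let $X:\Omega\to su(N)$ be the associated surface, i.e. $\partial_L X=[\partial_L P,P]$, $\partial_R X=-[\partial_R P,P]$. Then the induced metric $G_{BD}=(\partial_B X,\partial_D X)$, $B,D\in\{L,R\}$, is $$G_{LL}=J_L=\frac{\partial_L f^\dagger P\partial_L f}{f^\dagger f},\quad G_{RR}=J_R=\frac{\partial_R f^\dagger P\partial_R f}{f^\dagger f},\quad G_{LR}=-\Re\Big(\frac{\partial_R f^\dagger P\partial_L f}{f^\dagger f}\Big),$$ and the first fundamental form $I=J_L\,d\xi_L^2+2G_{LR}\,d\xi_L d\xi_R+J_R\,d\xi_R^2$ is positive semidefinite at every point of $\Omega$ ($J_L\ge 0$, $J_R\ge0$, $\det G\ge 0$). Moreover, $I$ is positive definite at a point $(\xi_L^0,\xi_R^0)\in\Omega$ if either $\Im\big(\partial_L f^\dagger P\partial_R f\big)(\xi_L^0,\xi_R^0)\neq 0$, or the vectors $\partial_L f(\xi_L^0,\xi_R^0)$, $\partial_R f(\xi_L^0,\xi_R^0)$,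 $f(\xi_L^0,\xi_R^0)$ are linearly independent over $\mathbb{C}$.
   Context: Minkowski metric $ds^2=(d\xi^1)^2-(d\xi^2)^2=d\xi_L\,d\xi_R$ with $\xi_L=\xi^1+\xi^2$, $\xi_R=\xi^1-\xi^2$, $\partial_L=\frac12(\partial_{\xi^1}+\partial_{\xi^2})$, $\partial_R=\frac12(\partial_{\xi^1}-\partial_{\xi^2})$. Vectors in $\mathbb{C}^N$ are columns, $f^\dagger$ is the conjugate transpose, and $f\otimes f^\dagger$ denotes the $N\times N$ matrix $ff^\dagger$. The algebra $su(N)$ is identified with the Euclidean space $\mathbb{R}^{N^2-1}$ via the scalar product $(A,B)=-\frac12\,\mathrm{tr}(AB)$. For a solution $f$ one has $\partial_L[\partial_R P,P]+\partial_R[\partial_L P,P]=0$, so an $su(N)$-valued function $X$ with $\partial_L X=[\partial_L P,P]$, $\partial_R X=-[\partial_R P,P]$ exists on $\Omega$ (unique up to an additive constant); its image is the surface associated with $f$. *)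

(* Defs.v *)
From HB Require Import structures.
From mathcomp Require Import all_boot all_order all_algebra.
From mathcomp Require Import complex.
From mathcomp Require Import all_classical all_reals all_analysis.
Set Implicit Arguments. Unset Strict Implicit. Unset Printing Implicit Defensive.
Import Order.TTheory GRing.Theory Num.Theory.
Import numFieldNormedType.Exports.
Local Open Scope classical_set_scope.
Local Open Scope ring_scope.
Local Open Scope complex_scope.

Section Defs.
Variable R : realType.
Local Notation C := R[i].
Local Notation pt := (R * R)%type.

Definition simply_connected (O : set pt) : Prop :=
  forall g : R -> pt,
    {within `[0, 1]%classic, continuous g} ->
    g @` `[0, 1]%classic `<=` O -> g 0 = g 1 ->
    exists H : pt -> pt,
      {within (`[0, 1]%classic `*` `[0, 1]%classic), continuous H} /\
      H @` (`[0, 1]%classic `*` `[0, 1]%classic) `<=` O /\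
      (forall s, s \in `[0, 1] -> H (s, 0) = g s /\ H (s, 1) = g 0) /\
      (forall t, t \in `[0, 1] -> H (0, t) = g 0 /\ H (1, t) = g 0).

Fixpoint iterD (vs : seq pt) (h : pt -> R) : pt -> R :=
  match vs with
  | [::] => h
  | v :: vs' => fun x => 'D_v (iterD vs' h) x
  end.

Definition smooth_on (O : set pt) (h : pt -> R) : Prop :=
  forall vs : seq pt,
    {within O, continuous (iterD vs h)} /\
    (forall v x, O x -> derivable (iterD vs h) x v).

Definition smooth_cvec_on (N : nat) (O : set pt) (f : pt -> 'cV[C]_N) : Prop :=
  forall i : 'I_N, smooth_on O (fun x => complex.Re (f x i 0)) /\
                   smooth_on O (fun x => complex.Im (f x i 0)).

(* xi^1 = (xi_L + xi_R)/2, xi^2 = (xi_L - xi_R)/2, hence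
   d_L = (d_1 + d_2)/2 is the derivative in direction (1/2, 1/2) and
   d_R = (d_1 - d_2)/2 the derivative in direction (1/2, -1/2). *)
Definition eL : pt := (2^-1, 2^-1).
Definition eR : pt := (2^-1, - 2^-1).

Definition dmx (m n : nat) (v : pt) (A : pt -> 'M[C]_(m, n)) : pt -> 'M[C]_(m, n) :=
  fun x => \matrix_(i, j) ('D_v (fun y => complex.Re (A y i j)) x
                           +i* 'D_v (fun y => complex.Im (A y i j)) x).

Definition mx_is_derive (m n : nat) (x v : pt) (A : pt -> 'M[C]_(m, n))
    (D : 'M[C]_(m, n)) : Prop :=
  forall i j, is_derive x v (fun y => complex.Re (A y i j)) (complex.Re (D i j)) /\
              is_derive x v (fun y => complex.Im (A y i j)) (complex.Im (D i j)).

Definition dL (m n : nat) := @dmx m n eL.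
Definition dR (m n : nat) := @dmx m n eR.

Definition adj (m n : nat) (A : 'M[C]_(m, n)) : 'M[C]_(n, m) :=
  (map_mx (@conjc R) A)^T.

Definition hprod (N : nat) (u v : 'cV[C]_N) : C := (adj u *m v) 0 0.

Definition projP (N : nat) (f : 'cV[C]_N) : 'M[C]_N :=
  1%:M - (hprod f f)^-1 *: (f *m adj f).

Definition comm (N : nat) (A B : 'M[C]_N) : 'M[C]_N := A *m B - B *m A.

Definition in_su (N : nat) (A : 'M[C]_N) : Prop := adj A = - A /\ \tr A = 0.

Definition su_dot (N : nat) (A B : 'M[C]_N) : C := - 2^-1 * \tr (A *m B).

Definition CPN_EL (N : nat) (O : set pt) (f : pt -> 'cV[C]_N) : Prop :=
  forall x, O x ->
    projP (f x) *m
      (dL (dR f) x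
       - (hprod (f x) (f x))^-1 *:
           (hprod (f x) (dR f x) *: dL f x + hprod (f x) (dL f x) *: dR f x))
    = 0.

Definition psd_form (a b c : C) : Prop :=
  forall u v : R, 0 <= a * u%:C ^+ 2 + 2%:R * b * u%:C * v%:C + c * v%:C ^+ 2.
Definition pd_form (a b c : C) : Prop :=
  forall u v : R, (u, v) != (0, 0) ->
    0 < a * u%:C ^+ 2 + 2%:R * b * u%:C * v%:C + c * v%:C ^+ 2.

End Defs.
Arguments eL {R}.
Arguments eR {R}.

(* Main.v *)
Require Import Defs.
From HB Require Import structures.
From mathcomp Require Import all_boot all_order all_algebra.
From mathcomp Require Import complex.
From mathcomp Require Import all_classical all_reals all_analysis.
From mathcomp Require Import ring lra.
Set Implicit Arguments. Unset Strict Implicit. Unset Printing Implicit Defensive.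
Import Order.TTheory GRing.Theory Num.Theory.
Import numFieldNormedType.Exports.
Local Open Scope ring_scope.
Local Open Scope complex_scope.

Notation cRe := complex.Re.
Notation cIm := complex.Im.
Section CDer.
Variable R : realType.
Local Notation C := R[i].
Local Notation pt := (R * R)%type.
Variables (x v : pt).

Definition cder (g : pt -> C) (d : C) :=
  is_derive x v (fun y => cRe (g y)) (cRe d) /\
  is_derive x v (fun y => cIm (g y)) (cIm d).

Lemma cder_ext {g h : pt -> C} {d : C} : (forall y, g y = h y) -> cder g d -> cder h d.
Proof. by move=> e; have -> : g = h by apply/funext. Qed.

Lemma cder_cst c : cder (fun _ => c) 0.
Proof. by split; apply: is_derive_cst. Qed.

Lemma cderD g h dg dh : cder g dg -> cder h dh ->
  cder (fun y => g y + h y) (dg + dh).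
Proof.
move=> [g1 g2] [h1 h2]; split.
- have -> : (fun y => cRe (g y + h y)) = (fun y => cRe (g y) + cRe (h y)).
    by apply/funext => y /=; case: (g y) (h y) => ? ? [? ?].
  have -> : cRe (dg + dh) = cRe dg + cRe dh by case: (dg) (dh) => ? ? [? ?].
  exact: is_deriveD.
- have -> : (fun y => cIm (g y + h y)) = (fun y => cIm (g y) + cIm (h y)).
    by apply/funext => y /=; case: (g y) (h y) => ? ? [? ?].
  have -> : cIm (dg + dh) = cIm dg + cIm dh by case: (dg) (dh) => ? ? [? ?].
  exact: is_deriveD.
Qed.

Lemma cderN g dg : cder g dg -> cder (fun y => - g y) (- dg).
Proof.
move=> [g1 g2]; split.
- have -> : (fun y => cRe (- g y)) = (fun y => - cRe (g y)).
    by apply/funext => y /=; case: (g y).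
  have -> : cRe (- dg) = - cRe dg by case: (dg).
  exact: is_deriveN.
- have -> : (fun y => cIm (- g y)) = (fun y => - cIm (g y)).
    by apply/funext => y /=; case: (g y).
  have -> : cIm (- dg) = - cIm dg by case: (dg).
  exact: is_deriveN.
Qed.

Lemma cderB g h dg dh : cder g dg -> cder h dh ->
  cder (fun y => g y - h y) (dg - dh).
Proof. by move=> a b; apply: cderD => //; apply: cderN. Qed.

Lemma cderM g h dg dh : cder g dg -> cder h dh ->
  cder (fun y => g y * h y) (g x * dh + dg * h x).
Proof.
move=> [g1 g2] [h1 h2]; split.
- have -> : (fun y => cRe (g y * h y)) = (fun y => cRe (g y) * cRe (h y)
     - cIm (g y) * cIm (h y)).
    by apply/funext => y /=; case: (g y) (h y) => ? ? [? ?].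
  have H := is_deriveB (is_deriveM g1 h1) (is_deriveM g2 h2); rewrite ?fctE /= in H; apply: (is_derive_eq H).
  rewrite /=; case: (g x) (h x) (dg) (dh) => ? ? [? ?] [? ?] [? ?] /=; rewrite -![_ *: _]/(_ * _); ring.
- have -> : (fun y => cIm (g y * h y)) = (fun y => cRe (g y) * cIm (h y)
     + cIm (g y) * cRe (h y)).
    by apply/funext => y /=; case: (g y) (h y) => ? ? [? ?].
  have H := is_deriveD (is_deriveM g1 h2) (is_deriveM g2 h1); rewrite ?fctE /= in H; apply: (is_derive_eq H).
  by rewrite /=; case: (g x) (h x) (dg) (dh) => ? ? [? ?] [? ?] [? ?] /=; rewrite -![_ *: _]/(_ * _); ring.
Qed.

Lemma cderJ g dg : cder g dg -> cder (fun y => (g y)^*) dg^*.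
Proof.
move=> [g1 g2]; split.
- have -> : (fun y => cRe ((g y)^*)) = (fun y => cRe (g y)).
    by apply/funext => y /=; case: (g y).
  by have -> : cRe dg^* = cRe dg by case: (dg).
- have -> : (fun y => cIm ((g y)^*)) = (fun y => - cIm (g y)).
    by apply/funext => y /=; case: (g y).
  have -> : cIm (dg^*) = - cIm dg by case: (dg).
  exact: is_deriveN.
Qed.

Lemma cderV g dg : g x != 0 -> cder g dg ->
  cder (fun y => (g y)^-1) (- dg / (g x) ^+ 2).
Proof.
move=> gx0 [g1 g2].
set n := (fun y => cRe (g y) ^+ 2 + cIm (g y) ^+ 2).
have nd : is_derive x v n ((cRe (g x)) * cRe dg + cRe dg * cRe (g x)
     + ((cIm (g x)) * cIm dg + cIm dg * cIm (g x))).
  have H := is_deriveD (is_deriveM g1 g1) (is_deriveM g2 g2); rewrite ?fctE /= in H; apply: (is_derive_eq H).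
  by rewrite -![_ *: _]/(_ * _); ring.
have nx0 : n x != 0.
  rewrite /n; move: gx0; case: (g x) => a b /= ab0.
  apply/eqP => h; move/eqP: ab0; apply; apply/eqP; rewrite eq_complex /=.
  have ha : a = 0 by nra.
  have hb : b = 0 by nra.
  by rewrite ha hb !eqxx.
have ni : is_derive x v (fun y => (n y)^-1) (- (n x) ^-2 *: 'D_v n x).
  apply: DeriveDef; first exact: derivableV nx0 (@ex_derive _ _ _ _ _ _ _ nd).
  by rewrite deriveV //; exact: (@ex_derive _ _ _ _ _ _ _ nd).
rewrite (@derive_val _ _ _ _ _ _ _ nd) in ni.
move: nx0 ni; rewrite /n; move: nd => _.
have ex : forall y, (g y)^-1 = (cRe (g y) * (cRe (g y) ^+ 2 + cIm (g y) ^+ 2)^-1)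
    +i* (- (cIm (g y) * (cRe (g y) ^+ 2 + cIm (g y) ^+ 2)^-1)).
  by move=> y; case: (g y).
move=> nx0 ni; split.
- have -> : (fun y => cRe ((g y)^-1)) = (fun y => cRe (g y) *
      (cRe (g y) ^+ 2 + cIm (g y) ^+ 2)^-1).
    by apply/funext => y; rewrite ex.
  have H := is_deriveM g1 ni; rewrite ?fctE /= in H; apply: (is_derive_eq H).
  move: nx0 gx0; rewrite /=; case: (g x) (dg) => a b [c d] /= nx0 gx0.
  rewrite -![_ *: _]/(_ * _).
  have e : (a * a - b * b) ^+ 2 + (a * b + b * a) ^+ 2 = (a ^+ 2 + b ^+ 2) ^+ 2 by ring.
  rewrite e; field; by rewrite ?expf_neq0.
- have -> : (fun y => cIm ((g y)^-1)) = (fun y => - (cIm (g y) *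
      (cRe (g y) ^+ 2 + cIm (g y) ^+ 2)^-1)).
    by apply/funext => y; rewrite ex.
  have H := is_deriveN (is_deriveM g2 ni); rewrite ?fctE /= in H; apply: (is_derive_eq H).
  move: nx0 gx0; rewrite /=; case: (g x) (dg) => a b [c d] /= nx0 gx0.
  rewrite -![_ *: _]/(_ * _).
  have e : (a * a - b * b) ^+ 2 + (a * b + b * a) ^+ 2 = (a ^+ 2 + b ^+ 2) ^+ 2 by ring.
  rewrite e; field; by rewrite ?expf_neq0.
Qed.

Lemma cder_sum (I : Type) (s : seq I) (g : I -> pt -> C) (d : I -> C) :
  (forall k, cder (g k) (d k)) ->
  cder (fun y => \sum_(k <- s) g k y) (\sum_(k <- s) d k).
Proof.
move=> H; elim: s => [|a s IH].
  by rewrite big_nil; apply: (cder_ext _ (cder_cst 0)) => y; rewrite big_nil.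
rewrite big_cons; apply: (cder_ext (g := fun y => g a y + \sum_(k <- s) g k y)); last exact: cderD (H a) IH.
by move=> y; rewrite big_cons.
Qed.


Lemma cder_eqd g d d' : cder g d -> d = d' -> cder g d'.
Proof. by move=> h <-. Qed.

End CDer.

Section MDer.
Variable R : realType.
Local Notation C := R[i].
Local Notation pt := (R * R)%type.
Variables (x v : pt).

Lemma mder_entry m n (A : pt -> 'M[C]_(m, n)) (D : 'M[C]_(m, n)) i j :
  mx_is_derive x v A D -> cder x v (fun y => A y i j) (D i j).
Proof. by move=> H; exact: H. Qed.

Lemma mderP m n (A : pt -> 'M[C]_(m, n)) (D : 'M[C]_(m, n)) :
  (forall i j, cder x v (fun y => A y i j) (D i j)) -> mx_is_derive x v A D.
Proof. by move=> H i j; exact: H. Qed.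

Lemma mder_dmx m n (A : pt -> 'M[C]_(m, n)) (D : 'M[C]_(m, n)) :
  mx_is_derive x v A D -> dmx v A x = D.
Proof.
move=> H; apply/matrixP => i j; rewrite mxE.
have [h1 h2] := H i j; rewrite (@derive_val _ _ _ _ _ _ _ h1) (@derive_val _ _ _ _ _ _ _ h2).
by case: (D i j).
Qed.

Lemma mder_cst m n (M : 'M[C]_(m, n)) : mx_is_derive x v (fun _ => M) 0.
Proof. by apply: mderP => i j; rewrite mxE; exact: cder_cst. Qed.

Lemma mderD m n (A B : pt -> 'M[C]_(m, n)) dA dB :
  mx_is_derive x v A dA -> mx_is_derive x v B dB ->
  mx_is_derive x v (fun y => A y + B y) (dA + dB).
Proof.
move=> hA hB; apply: mderP => i j; rewrite mxE.
apply: (cder_ext (g := fun y => A y i j + B y i j)); first by move=> y; rewrite mxE.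
exact: cderD (hA i j) (hB i j).
Qed.

Lemma mderN m n (A : pt -> 'M[C]_(m, n)) dA :
  mx_is_derive x v A dA -> mx_is_derive x v (fun y => - A y) (- dA).
Proof.
move=> hA; apply: mderP => i j; rewrite mxE.
apply: (cder_ext (g := fun y => - A y i j)); first by move=> y; rewrite mxE.
exact: cderN (hA i j).
Qed.

Lemma mderB m n (A B : pt -> 'M[C]_(m, n)) dA dB :
  mx_is_derive x v A dA -> mx_is_derive x v B dB ->
  mx_is_derive x v (fun y => A y - B y) (dA - dB).
Proof. by move=> hA hB; apply: mderD => //; apply: mderN. Qed.

Lemma mderM m n p (A : pt -> 'M[C]_(m, n)) (B : pt -> 'M[C]_(n, p)) dA dB :
  mx_is_derive x v A dA -> mx_is_derive x v B dB ->
  mx_is_derive x v (fun y => A y *m B y) (A x *m dB + dA *m B x).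
Proof.
move=> hA hB; apply: mderP => i j.
apply: (cder_ext (g := fun y => \sum_k A y i k * B y k j)); first by move=> y; rewrite mxE.
apply: cder_eqd; first by apply: cder_sum => k; exact: cderM (hA i k) (hB k j).
by rewrite !mxE -big_split.
Qed.

Lemma mderZ m n (c : pt -> C) dc (A : pt -> 'M[C]_(m, n)) dA :
  cder x v c dc -> mx_is_derive x v A dA ->
  mx_is_derive x v (fun y => c y *: A y) (c x *: dA + dc *: A x).
Proof.
move=> hc hA; apply: mderP => i j.
apply: (cder_ext (g := fun y => c y * A y i j)); first by move=> y; rewrite mxE.
apply: cder_eqd; first exact: cderM hc (hA i j).
by rewrite !mxE.
Qed.

Lemma mder_adj m n (A : pt -> 'M[C]_(m, n)) dA :
  mx_is_derive x v A dA -> mx_is_derive x v (fun y => adj (A y)) (adj dA).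
Proof.
move=> hA; apply: mderP => i j.
apply: (cder_ext (g := fun y => (A y j i)^*)); first by move=> y; rewrite !mxE.
rewrite /adj !mxE; exact: cderJ (hA j i).
Qed.

End MDer.


Section Alg.
Variable R : realType.
Local Notation C := R[i].
Variable N : nat.
Local Notation V := 'cV[C]_N.

Lemma adjE m n (A : 'M[C]_(m, n)) i j : adj A i j = conjc (A j i).
Proof. by rewrite !mxE. Qed.

Lemma adjK m n (A : 'M[C]_(m, n)) : adj (adj A) = A.
Proof. by apply/matrixP => i j; rewrite !adjE conjcK. Qed.

Lemma adjD m n (A B : 'M[C]_(m, n)) : adj (A + B) = adj A + adj B.
Proof. by apply/matrixP => i j; rewrite !mxE rmorphD. Qed.

Lemma adjN m n (A : 'M[C]_(m, n)) : adj (- A) = - adj A.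
Proof. by apply/matrixP => i j; rewrite !mxE rmorphN. Qed.

Lemma adjB m n (A B : 'M[C]_(m, n)) : adj (A - B) = adj A - adj B.
Proof. by rewrite adjD adjN. Qed.

Lemma adjZ m n s (A : 'M[C]_(m, n)) : adj (s *: A) = conjc s *: adj A.
Proof. by apply/matrixP => i j; rewrite !mxE rmorphM. Qed.

Lemma adjM m n p (A : 'M[C]_(m, n)) (B : 'M[C]_(n, p)) : adj (A *m B) = adj B *m adj A.
Proof.
apply/matrixP => i j; rewrite !mxE rmorph_sum; apply: eq_bigr => k _.
by rewrite !mxE rmorphM mulrC.
Qed.

Lemma adj1 : adj (1%:M : 'M[C]_N) = 1%:M.
Proof. by rewrite /adj map_mx1 trmx1. Qed.

Lemma hprodE (u w : V) : adj u *m w = (hprod u w)%:M.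
Proof. exact: mx11_scalar. Qed.

Lemma outer_mul (u w y z : V) :
  (u *m adj w) *m (y *m adj z) = hprod w y *: (u *m adj z).
Proof. by rewrite mulmxA -(mulmxA u) hprodE mul_mx_scalar -scalemxAl. Qed.

Lemma tr_outer (u w : V) : \tr (u *m adj w) = hprod w u.
Proof. by rewrite mxtrace_mulC hprodE /mxtrace big_ord1 mxE. Qed.

Lemma hprodC (u w : V) : hprod u w = conjc (hprod w u).
Proof.
by rewrite /hprod -adjE adjM adjK.
Qed.

Lemma hprodDr (u w z : V) : hprod u (w + z) = hprod u w + hprod u z.
Proof. by rewrite /hprod mulmxDr mxE. Qed.
Lemma hprodNr (u w : V) : hprod u (- w) = - hprod u w.
Proof. by rewrite /hprod mulmxN mxE. Qed.
Lemma hprodBr (u w z : V) : hprod u (w - z) = hprod u w - hprod u z.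
Proof. by rewrite hprodDr hprodNr. Qed.
Lemma hprodZr s (u w : V) : hprod u (s *: w) = s * hprod u w.
Proof. by rewrite /hprod -scalemxAr mxE. Qed.
Lemma hprodDl (u w z : V) : hprod (w + z) u = hprod w u + hprod z u.
Proof. by rewrite /hprod adjD mulmxDl mxE. Qed.
Lemma hprodNl (u w : V) : hprod (- w) u = - hprod w u.
Proof. by rewrite /hprod adjN mulNmx mxE. Qed.
Lemma hprodBl (u w z : V) : hprod (w - z) u = hprod w u - hprod z u.
Proof. by rewrite hprodDl hprodNl. Qed.
Lemma hprodZl s (u w : V) : hprod (s *: w) u = conjc s * hprod w u.
Proof. by rewrite /hprod adjZ -scalemxAl mxE. Qed.

Lemma hprod_sum (u w : V) : hprod u w = \sum_k conjc (u k 0) * w k 0.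
Proof. by rewrite /hprod mxE; apply: eq_bigr => k _; rewrite !mxE. Qed.

Lemma hprod_ge0 (u : V) : 0 <= hprod u u.
Proof.
rewrite hprod_sum; apply: sumr_ge0 => k _; rewrite mulrC; exact: mulcJ_ge0.
Qed.

Lemma hprod_eq0 (u : V) : hprod u u = 0 -> u = 0.
Proof.
rewrite hprod_sum => /eqP; rewrite psumr_eq0; last first.
  by move=> k _; rewrite mulrC; exact: mulcJ_ge0.
move=> /allP H; apply/matrixP => i j; rewrite (ord1 j) mxE.
have := H i (mem_index_enum _); rewrite mulf_eq0 conjc_eq0 => /orP[] /eqP //.
Qed.

Lemma hprod_gt0 (u : V) : u != 0 -> 0 < hprod u u.
Proof.
move=> u0; rewrite lt_def hprod_ge0 andbT; apply/eqP => /hprod_eq0 h.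
by rewrite h eqxx in u0.
Qed.

Lemma hprod_real (u : V) : conjc (hprod u u) = hprod u u.
Proof. by rewrite -hprodC. Qed.


Section Proj.
Variable f : V.
Hypothesis hf : hprod f f != 0.
Local Notation n := (hprod f f).
Local Notation P := (projP f).

Lemma conj_n : conjc n = n.
Proof. exact: hprod_real. Qed.

Lemma conj_ninv : conjc (n^-1) = n^-1.
Proof. by rewrite fmorphV; congr (_^-1); exact: conj_n. Qed.

Lemma projP_adj : adj P = P.
Proof.
by rewrite /projP adjB adj1 adjZ adjM adjK conj_ninv.
Qed.

Lemma projP_mulv (u : V) : P *m u = u - (n^-1 * hprod f u) *: f.
Proof.
by rewrite /projP mulmxBl mul1mx -scalemxAl -mulmxA hprodE mul_mx_scalar scalerA.
Qed.

Lemma projP_f : P *m f = 0.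
Proof. by rewrite projP_mulv mulVf // scale1r subrr. Qed.

Lemma hprod_f_P (u : V) : hprod f (P *m u) = 0.
Proof. rewrite projP_mulv hprodBr hprodZr; field; done. Qed.

Lemma hprod_P_f (u : V) : hprod (P *m u) f = 0.
Proof. by rewrite hprodC hprod_f_P rmorph0. Qed.

Lemma adjPv (u : V) : adj (P *m u) = adj u *m P.
Proof. by rewrite adjM projP_adj. Qed.

Lemma adj_f_P : adj f *m P = 0.
Proof.
apply/matrixP => i j; rewrite -adjPv projP_f !mxE.
by rewrite rmorph0.
Qed.

Lemma projP_idem : P *m P = P.
Proof.
rewrite {2}/projP mulmxBr mulmx1 -scalemxAr mulmxA projP_f mul0mx scaler0.
by rewrite subr0.
Qed.

Lemma projP_idemv (u : V) : P *m (P *m u) = P *m u.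
Proof. by rewrite mulmxA projP_idem. Qed.

Lemma hprod_PP (u w : V) : hprod (P *m u) (P *m w) = hprod u (P *m w).
Proof. by rewrite /hprod adjPv -mulmxA projP_idemv. Qed.

End Proj.
End Alg.


Section Alg2.
Variable R : realType.
Local Notation C := R[i].
Lemma cjM (a b : C) : conjc (a * b) = conjc a * conjc b. Proof. exact: rmorphM. Qed.
Lemma cjB (a b : C) : conjc (a - b) = conjc a - conjc b. Proof. exact: rmorphB. Qed.
Lemma cjD (a b : C) : conjc (a + b) = conjc a + conjc b. Proof. exact: rmorphD. Qed.
Lemma cjN (a : C) : conjc (- a) = - conjc a. Proof. exact: rmorphN. Qed.

Variable N : nat.
Local Notation V := 'cV[C]_N.
Variable f : V.
Hypothesis hf : hprod f f != 0.
Local Notation n := (hprod f f).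
Local Notation P := (projP f).

Lemma DP_eq (d : V) :
  0 - ((n^-1) *: (f *m adj d + d *m adj f) +
       (- ((adj f *m d + adj d *m f) 0 0) / n ^+ 2) *: (f *m adj f)) =
  - n^-1 *: ((P *m d) *m adj f + f *m adj (P *m d)).
Proof.
rewrite projP_mulv //.
have -> : (adj f *m d + adj d *m f) 0 0 = hprod f d + hprod d f by rewrite mxE.
apply/matrixP => i j; rewrite !mxE !big_ord1 !mxE cjB !cjM conj_ninv // -hprodC.
field; done.
Qed.

Lemma comm_gen (Q : 'M[C]_N) (a : V) (c : C) :
  adj f *m Q = 0 -> Q *m f = 0 -> Q *m a = a -> adj a *m Q = adj a ->
  comm (- c *: (a *m adj f + f *m adj a)) Q = c *: (a *m adj f - f *m adj a).
Proof.
move=> fQ Qf Qa aQ.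
rewrite /comm -scalemxAl -scalemxAr mulmxDl mulmxDr -!mulmxA fQ aQ !mulmxA Qa Qf.
rewrite mulmx0 mul0mx.
apply/matrixP => i j; rewrite !mxE; ring.
Qed.

Lemma comm_eq (a : V) : P *m a = a ->
  comm (- n^-1 *: (a *m adj f + f *m adj a)) P = n^-1 *: (a *m adj f - f *m adj a).
Proof.
move=> Pa; apply: comm_gen => //; [exact: adj_f_P | exact: projP_f |].
by rewrite -adjPv // Pa.
Qed.

Lemma trZ (s : C) (A : 'M[C]_N) : \tr (s *: A) = s * \tr A.
Proof. exact: mxtraceZ. Qed.

Lemma tr_eq (a b : V) : hprod f a = 0 -> hprod f b = 0 ->
  \tr ((a *m adj f - f *m adj a) *m (b *m adj f - f *m adj b)) =
  - n * (hprod b a + hprod a b).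
Proof.
move=> fa fb.
have af : hprod a f = 0 by rewrite hprodC fa rmorph0.
have bf : hprod b f = 0 by rewrite hprodC fb rmorph0.
rewrite mulmxBl !mulmxBr !outer_mul !raddfB /= !trZ !tr_outer.
rewrite ?fa ?fb ?af ?bf; ring.
Qed.

Lemma su_dotZ (s t : C) (A B : 'M[C]_N) :
  su_dot (s *: A) (t *: B) = s * t * (- 2^-1 * \tr (A *m B)).
Proof. by rewrite /su_dot -scalemxAl -scalemxAr !mxtraceZ; ring. Qed.

End Alg2.


Section Der.
Variable R : realType.
Local Notation C := R[i].
Local Notation pt := (R * R)%type.
Variable N : nat.
Local Notation V := 'cV[C]_N.

Lemma mder_f (O : set pt) (f : pt -> V) (x v : pt) :
  smooth_cvec_on O f -> O x -> mx_is_derive x v f (dmx v f x).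
Proof.
move=> sm Ox i j; rewrite (ord1 j) !mxE /=.
have [s1 s2] := sm i.
have d1 : derivable (fun y => complex.Re (f y i 0)) x v := (s1 [::]).2 v x Ox.
have d2 : derivable (fun y => complex.Im (f y i 0)) x v := (s2 [::]).2 v x Ox.
by split; apply: derivableP.
Qed.

Lemma mder_proj (f : pt -> V) (x v : pt) (df : V) :
  mx_is_derive x v f df -> hprod (f x) (f x) != 0 ->
  mx_is_derive x v (fun y => projP (f y))
   (0 - ((hprod (f x) (f x))^-1 *: (f x *m adj df + df *m adj (f x)) +
       (- ((adj (f x) *m df + adj df *m f x) 0 0) / (hprod (f x) (f x)) ^+ 2)
          *: (f x *m adj (f x)))).
Proof.
move=> hf n0.
have hn : cder x v (fun y => hprod (f y) (f y)) ((adj (f x) *m df + adj df *m f x) 0 0).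
  exact: mder_entry (mderM (mder_adj hf) hf).
have hi := cderV n0 hn.
have hM := mderM hf (mder_adj hf).
have := mderB (mder_cst x v 1%:M) (mderZ hi hM). rewrite /projP. exact.
Qed.

Lemma dmx_proj (f : pt -> V) (x v : pt) (df : V) :
  mx_is_derive x v f df -> hprod (f x) (f x) != 0 ->
  dmx v (fun y => projP (f y)) x =
  - (hprod (f x) (f x))^-1 *: ((projP (f x) *m df) *m adj (f x)
      + f x *m adj (projP (f x) *m df)).
Proof.
move=> hf n0; rewrite (mder_dmx (mder_proj hf n0)); exact: DP_eq.
Qed.

End Der.


Section Small.
Variable R : realType.
Local Notation C := R[i].

Lemma quad_det (a b c : R) :
  (forall u v : R, 0 <= a * u ^+ 2 + 2 * b * u * v + c * v ^+ 2) ->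
  0 <= a * c - b ^+ 2.
Proof.
move=> H.
have ha := H 1 0; have hc := H 0 1; have h1 := H (- b) a; have h2 := H c (- b).
have h3 := H 1 (- b).
have [a0|a0] := ltrP 0 a.
  have : 0 <= a * (a * c - b ^+ 2) by nra.
  by rewrite pmulr_rge0.
have [c0|c0] := ltrP 0 c.
  have : 0 <= c * (a * c - b ^+ 2) by nra.
  by rewrite pmulr_rge0.
nra.
Qed.

Lemma cj_real (u : R) : conjc (u%:C) = u%:C.
Proof. by apply/eqP; rewrite eq_complex /= oppr0 !eqxx. Qed.

Lemma Im_realM (u : R) (z : C) : complex.Im (u%:C * z) = u * complex.Im z.
Proof. by case: z => p q /=; ring. Qed.

Lemma Re_realM (u : R) (z : C) : complex.Re (u%:C * z) = u * complex.Re z.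
Proof. by case: z => p q /=; ring. Qed.

Lemma real_inj (u : R) : u%:C = 0 -> u = 0.
Proof. by case. Qed.

Lemma Im_conj_eq (z : C) : conjc z = z -> complex.Im z = 0.
Proof. case: z => p q [] /=; lra. Qed.


Lemma ge0_real (z : C) : 0 <= z -> z = (complex.Re z)%:C.
Proof. by case: z => p q; rewrite lecE /= => /andP[/eqP -> _]. Qed.

Lemma lec_real (p : R) : (0 <= p%:C) = (0 <= p).
Proof. by rewrite lecR. Qed.

Lemma ltc_real (p : R) : (0 < p%:C) = (0 < p).
Proof. by rewrite ltcR. Qed.

End Small.
Lemma ReC_eq (R : realType) (z : R[i]) : (complex.Re z)%:C = (z + conjc z) / 2%:R.
Proof. exact: ReJ_add. Qed.


Section Core.
Variable R : realType.
Local Notation C := R[i].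
Variable N : nat.
Local Notation V := 'cV[C]_N.

Lemma hprod0r (u : V) : hprod u 0 = 0.
Proof. by rewrite /hprod mulmx0 mxE. Qed.

Lemma rcM (p q : R) : (p * q)%:C = p%:C * q%:C. Proof. exact: rmorphM. Qed.
Lemma rcD (p q : R) : (p + q)%:C = p%:C + q%:C. Proof. exact: rmorphD. Qed.
Lemma rcB (p q : R) : (p - q)%:C = p%:C - q%:C. Proof. exact: rmorphB. Qed.
Lemma rcN (p : R) : (- p)%:C = - p%:C. Proof. exact: rmorphN. Qed.
Lemma rcX (p : R) : (p ^+ 2)%:C = p%:C ^+ 2. Proof. exact: rmorphXn. Qed.
Lemma rc2 : (2 : R)%:C = 2%:R. Proof. exact: rmorph_nat. Qed.

Lemma quad_real (al be ga u v : R) :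
  al%:C * u%:C ^+ 2 + 2%:R * be%:C * u%:C * v%:C + ga%:C * v%:C ^+ 2
  = (al * u ^+ 2 + 2 * be * u * v + ga * v ^+ 2)%:C.
Proof. by rewrite -!rcX -rc2 -!rcM -!rcD. Qed.

Lemma det_real (al be ga : R) :
  al%:C * ga%:C - be%:C * be%:C = (al * ga - be ^+ 2)%:C.
Proof. by rewrite expr2 -!rcM -rcB. Qed.

Lemma ImB (z w : C) : complex.Im (z - w) = complex.Im z - complex.Im w.
Proof. by case: z w => ? ? [? ?]. Qed.

Lemma core (F dLf dRf : V) (DL DR XL XR : 'M[C]_N) :
  F != 0 ->
  DL = - (hprod F F)^-1 *: ((projP F *m dLf) *m adj F + F *m adj (projP F *m dLf)) ->
  DR = - (hprod F F)^-1 *: ((projP F *m dRf) *m adj F + F *m adj (projP F *m dRf)) ->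
  XL = comm DL (projP F) ->
  XR = - comm DR (projP F) ->
    let G_LL := su_dot XL XL in
    let G_LR := su_dot XL XR in
    let G_RL := su_dot XR XL in
    let G_RR := su_dot XR XR in
    let nf := hprod F F in
    let J_L := hprod dLf (projP F *m dLf) / nf in
    let J_R := hprod dRf (projP F *m dRf) / nf in
    [/\ G_LL = J_L, G_RR = J_R,
        G_LR = - (complex.Re (hprod dRf (projP F *m dLf) / nf))%:C
          /\ G_RL = G_LR,
        psd_form G_LL G_LR G_RR /\
          [/\ 0 <= J_L, 0 <= J_R & 0 <= G_LL * G_RR - G_LR * G_RL] &
        ((complex.Im (hprod dLf (projP F *m dRf)) != 0 \/
          free [:: dLf; dRf; F]) ->
           pd_form G_LL G_LR G_RR)].
Proof.
move=> fF eDL eDR eXL eXR GLL GLR GRL GRR nf JL JR.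
rewrite /GLL /GLR /GRL /GRR /JL /JR /nf.
have nP : 0 < hprod F F := hprod_gt0 fF.
have n0 : hprod F F != 0 by rewrite gt_eqF.
have PaL : projP F *m (projP F *m dLf) = projP F *m dLf by rewrite projP_idemv.
have PaR : projP F *m (projP F *m dRf) = projP F *m dRf by rewrite projP_idemv.
have hLa : hprod dLf (projP F *m dLf) = hprod (projP F *m dLf) (projP F *m dLf) by rewrite hprod_PP.
have hRb : hprod dRf (projP F *m dRf) = hprod (projP F *m dRf) (projP F *m dRf) by rewrite hprod_PP.
have hRa : hprod dRf (projP F *m dLf) = hprod (projP F *m dRf) (projP F *m dLf) by rewrite hprod_PP.
have hLb : hprod dLf (projP F *m dRf) = hprod (projP F *m dLf) (projP F *m dRf) by rewrite hprod_PP.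
rewrite hLa hRb hRa hLb.
have [a ea] : exists a, projP F *m dLf = a by eexists.
have [b eb] : exists b, projP F *m dRf = b by eexists.
rewrite ea eb in PaL PaR eDL eDR *.
move: PaL PaR => Pa Pb.
have fa : hprod F a = 0 by rewrite -Pa hprod_f_P.
have fb : hprod F b = 0 by rewrite -Pb hprod_f_P.
have XLe : XL = (hprod F F)^-1 *: (a *m adj F - F *m adj a).
  by rewrite eXL eDL comm_eq.
have XRe : XR = (- (hprod F F)^-1) *: (b *m adj F - F *m adj b).
  by rewrite eXR eDR comm_eq // scaleNr.
have eLL : su_dot XL XL = hprod a a / hprod F F.
  by rewrite XLe su_dotZ tr_eq //; field.
have eRR : su_dot XR XR = hprod b b / hprod F F.
  by rewrite XRe su_dotZ tr_eq //; field.
have two0 : (2%:R : C) != 0 by rewrite pnatr_eq0.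
have eLR : su_dot XL XR = - (hprod b a + hprod a b) / (2%:R * hprod F F).
  by rewrite XLe XRe su_dotZ tr_eq //; field.
have eRL : su_dot XR XL = su_dot XL XR by rewrite /su_dot mxtrace_mulC.
have eB : - (cRe (hprod b a / hprod F F))%:C = - (hprod b a + hprod a b) / (2%:R * hprod F F).
  by rewrite ReC_eq cjM conj_ninv // -hprodC; field.
have eLR' : su_dot XL XR = - (cRe (hprod b a / hprod F F))%:C by rewrite eLR eB.
rewrite eRL eLL eRR eLR'.
have A0 : 0 <= hprod a a / hprod F F := divr_ge0 (hprod_ge0 a) (ltW nP).
have C0 : 0 <= hprod b b / hprod F F := divr_ge0 (hprod_ge0 b) (ltW nP).
have formE : forall u v : R,
  hprod a a / hprod F F * u%:C ^+ 2 + 2%:R * (- (cRe (hprod b a / hprod F F))%:C) * u%:C * v%:C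
   + hprod b b / hprod F F * v%:C ^+ 2
  = hprod (u%:C *: a - v%:C *: b) (u%:C *: a - v%:C *: b) / hprod F F.
  by move=> u v; rewrite eB hprodBl !hprodBr !hprodZl !hprodZr !cj_real; field.
have psdH : psd_form (hprod a a / hprod F F) (- (cRe (hprod b a / hprod F F))%:C)
   (hprod b b / hprod F F).
  rewrite /psd_form => p q; rewrite formE; apply: divr_ge0 (hprod_ge0 _) (ltW nP).
split.
- done.
- done.
- by split.
- split; first exact: psdH.
  split; [exact: A0 | exact: C0 |].
  rewrite (ge0_real A0) (ge0_real C0) -rcN det_real lec_real.
  apply: quad_det => u v.
  by have := psdH u v; rewrite (ge0_real A0) (ge0_real C0) -rcN quad_real lec_real.
- move=> Hyp; rewrite /pd_form => u v uv0; rewrite formE.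
apply: divr_gt0 _ nP; apply: hprod_gt0.
apply/eqP => w0.
have e1 : u%:C * hprod a a - v%:C * hprod a b = 0.
  by have := congr1 (hprod a) w0; rewrite hprodBr !hprodZr hprod0r.
have e2 : u%:C * hprod b a - v%:C * hprod b b = 0.
  by have := congr1 (hprod b) w0; rewrite hprodBr !hprodZr hprod0r.
move: uv0; rewrite xpair_eqE negb_and => uv0.
case: Hyp => [Him | Hfree].
  have Iaa : cIm (hprod a a) = 0 := Im_conj_eq (hprod_real a).
  have := congr1 (@complex.Im R) e1.
  rewrite ImB !Im_realM Iaa mulr0 sub0r => /eqP; rewrite oppr_eq0 mulf_eq0 (negPf Him) orbF.
  move=> /eqP v0.
  move: e2; rewrite v0 mul0r subr0 => /eqP; rewrite mulf_eq0 => /orP[/eqP/real_inj u0 | /eqP ba0].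
    by move: uv0; rewrite u0 v0 eqxx.
  have ab0 : hprod a b = 0 by rewrite hprodC ba0; exact: rmorph0.
  by move: Him; rewrite ab0 eqxx.
have wP : u%:C *: a - v%:C *: b = projP F *m (u%:C *: dLf - v%:C *: dRf).
  by rewrite mulmxBr -!scalemxAr ea eb.
rewrite wP projP_mulv // in w0.
move: w0; set c := (_ * _) => w0.
move/freeP: Hfree => /(_ (fun i => [:: u%:C; - v%:C; - c]`_i)) H.
have Hs : \sum_(i < 3) [:: u%:C; - v%:C; - c]`_i *: [:: dLf; dRf; F]`_i = 0.
  rewrite !big_ord_recl big_ord0 /=.
  apply/matrixP => i j; have e := congr1 (fun M : 'cV[C]_N => M i j) w0.
  rewrite /= !mxE in e; rewrite !mxE addr0 -[X in _ = X]e; ring.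
have := H Hs ord0; rewrite /= => /real_inj u0.
have := H Hs (Ordinal (isT : (1 < 3)%N)); rewrite /= => /eqP; rewrite oppr_eq0 => /eqP /real_inj v0.
by move: uv0; rewrite u0 v0 eqxx.
Qed.
End Core.
Unset Implicit Arguments. Set Strict Implicit.
Local Open Scope classical_set_scope.
Local Open Scope ring_scope.
Local Open Scope complex_scope.

Theorem mainTheorem1 (R : realType) (N : nat) (Omega : set (R * R))
  (f : R * R -> 'cV[R[i]]_N) (X : R * R -> 'M[R[i]]_N) :
  open Omega -> connected Omega -> simply_connected Omega ->
  smooth_cvec_on Omega f ->
  (forall x, Omega x -> f x != 0) ->
  CPN_EL Omega f ->
  (forall x, Omega x -> in_su (X x)) ->
  (forall x, Omega x ->
     mx_is_derive x eL X (comm (dL (fun y => projP (f y)) x) (projP (f x)))) ->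
  (forall x, Omega x ->
     mx_is_derive x eR X (- comm (dR (fun y => projP (f y)) x) (projP (f x)))) ->
  forall x, Omega x ->
    let G_LL := su_dot (dL X x) (dL X x) in
    let G_LR := su_dot (dL X x) (dR X x) in
    let G_RL := su_dot (dR X x) (dL X x) in
    let G_RR := su_dot (dR X x) (dR X x) in
    let nf := hprod (f x) (f x) in
    let J_L := hprod (dL f x) (projP (f x) *m dL f x) / nf in
    let J_R := hprod (dR f x) (projP (f x) *m dR f x) / nf in
    [/\ G_LL = J_L, G_RR = J_R,
        G_LR = - (complex.Re (hprod (dR f x) (projP (f x) *m dL f x) / nf))%:C
          /\ G_RL = G_LR,
        psd_form G_LL G_LR G_RR /\
          [/\ 0 <= J_L, 0 <= J_R & 0 <= G_LL * G_RR - G_LR * G_RL] &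
        ((complex.Im (hprod (dL f x) (projP (f x) *m dR f x)) != 0 \/
          free [:: dL f x; dR f x; f x]) ->
           pd_form G_LL G_LR G_RR)].
Proof.
move=> _ _ _ sm fnz _ _ dXL dXR x Ox.
have hL : mx_is_derive x eL f (dL f x) := mder_f eL sm Ox.
have hR : mx_is_derive x eR f (dR f x) := mder_f eR sm Ox.
have n0 : hprod (f x) (f x) != 0 by rewrite gt_eqF // hprod_gt0 // fnz.
apply: (core (DL := dL (fun y => projP (f y)) x) (DR := dR (fun y => projP (f y)) x)).
- exact: fnz.
- exact: dmx_proj hL n0.
- exact: dmx_proj hR n0.
- exact: mder_dmx (dXL x Ox).
- exact: mder_dmx (dXR x Ox).
Qed.
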